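(* Let $d, N, s \ge 1$ and let $\mathbf{x}[1],\ldots,\mathbf{x}[N] \in \mathbb{R}^{d}$ be jointly Gaussian, zero-mean random vectors with $\mathrm{E}\{\mathbf{x}[n]\mathbf{x}^{T}[n']\} = \delta_{n,n'}\mathbf{C}[n]$, where the covariance matrices satisfy $0<\alpha[n] \le \lambda_{\min}(\mathbf{C}[n]) \le \lambda_{\max}(\mathbf{C}[n]) \le \beta[n]$ for given constants $\beta[n]\ge\alpha[n]>0$. Let $\mathbf{K}[n] := (\mathbf{C}[n])^{-1}$. Define the conditional independence graph $\mathcal{G}=(\mathcal{V},\mathcal{E})$ with $\mathcal{V}=\{1,\ldots,d\}$ by: for $a\neq b$, $(a,b)\notin\mathcal{E}$ iff $(\mathbf{K}[n])_{a,b}=0$ for all $n\in\{1,\ldots,N\}$. Let $\mathcal{N}(r)=\{t\in\mathcal{V}:(r,t)\in\mathcal{E}\}$ and assume $|\mathcal{N}(r)|\le s$ for all $r$. Define for $a\ne b$ the partial correlation $$\rho_{a,b} := \frac{1}{N}\sum_{n=1}^{N} \alpha[n]\Big[ (\mathbf{K}[n])_{a,b} / (\mathbf{K}[n])_{a,a}\Big]^2,$$ and assume there is $\rho_{\min}>0$ with $\rho_{a,b}\ge\rho_{\min}$ whenever $(a,b)\in\mathcal{E}$. For $i\in\mathcal{V}$ let $\mathbf{x}_i[\cdot]=(x_i[1],\ldots,x_i[N])^T$, and for $r\in\mathcal{V}$ and $\mathcal{T}\subseteq\mathcal{V}\setminus\{r\}$ let $$\mathrm{CV}(r,\mathcal{T})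 := \frac{1}{N}\,\mathrm{Tr}\Big\{ \mathrm{cov}\big\{ \mathbf{x}_r[\cdot] \,\big|\, \{\mathbf{x}_t[\cdot]\}_{t\in\mathcal{T}} \big\} \Big\}.$$ Let $\widetilde{\mathbf{K}}[r,r]$ denote the $N\times N$ diagonal matrix $\mathrm{diag}\big((\mathbf{K}[1])_{r,r},\ldots,(\mathbf{K}[N])_{r,r}\big)$ (equivalently, the $(r,r)$-th $N\times N$ block of the inverse covariance matrix of the component-wise stacked vector $(\mathbf{x}_1[\cdot]^T,\ldots,\mathbf{x}_d[\cdot]^T)^T$). Then for every $r\in\mathcal{V}$ and every $\mathcal{T}\subseteq\mathcal{V}\setminus\{r\}$ with $|\mathcal{T}|\le s$: (i) if $\mathcal{N}(r)\setminus\mathcal{T}\neq\emptyset$, then $\mathrm{CV}(r,\mathcal{T}) \ge \rho_{\min} + \frac{1}{N}\mathrm{Tr}\{\widetilde{\mathbf{K}}[r,r]^{-1}\}$; (ii) if $\mathcal{N}(r)\subseteq\mathcal{T}$, then $\mathrm{CV}(r,\mathcal{T}) = \frac{1}{N}\mathrm{Tr}\{\widetilde{\mathbf{K}}[r,r]^{-1}\}$.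
   Context: $\delta_{n,n'}$ is the Kronecker delta; $\lambda_{\min},\lambda_{\max}$ denote the smallest and largest eigenvalues. $\mathrm{cov}\{\mathbf{y}\mid\mathbf{z}\}$ denotes the conditional covariance matrix of $\mathbf{y}$ given $\mathbf{z}$ (deterministic for jointly Gaussian vectors). The graph $\mathcal{G}$ is an undirected simple graph; $(a,b)\in\mathcal{E}$ and $(b,a)\in\mathcal{E}$ mean the same edge. *)

(* Defs.v *)
From HB Require Import structures.
From mathcomp Require Import all_boot all_order all_algebra.
From mathcomp Require Import reals.
Set Implicit Arguments. Unset Strict Implicit. Unset Printing Implicit Defensive.
Import Order.TTheory GRing.Theory Num.Theory.
Local Open Scope ring_scope.

Section Defs.
Variables (R : realType) (d N : nat).

(* Covariance (as a function on a finite index type) of the stacked vector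
   (x_a[n])_{(a,n)} with E{x[n] x[n']^T} = delta_{n,n'} C[n]. *)
Definition stack_cov (C : 'I_N -> 'M[R]_d) : 'I_d * 'I_N -> 'I_d * 'I_N -> R :=
  fun i j => if i.2 == j.2 then C i.2 i.1 j.1 else 0.

Definition subcov {I : finType} (S : I -> I -> R) (A B : {set I}) : 'M[R]_(#|A|, #|B|) :=
  \matrix_(i, j) S (enum_val i) (enum_val j).

(* Conditional covariance cov{y_A | y_B} of a zero-mean jointly Gaussian vector
   with covariance S: Schur complement S_AA - S_AB S_BB^{-1} S_BA. *)
Definition cond_cov {I : finType} (S : I -> I -> R) (A B : {set I}) : 'M[R]_#|A| :=
  subcov S A A - subcov S A B *m invmx (subcov S B B) *m subcov S B A.

Definition prec (C : 'I_N -> 'M[R]_d) (n : 'I_N) : 'M[R]_d := invmx (C n).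

Definition cig_edge (C : 'I_N -> 'M[R]_d) (a b : 'I_d) : bool :=
  (a != b) && [exists n, prec C n a b != 0].

Definition nbhd (C : 'I_N -> 'M[R]_d) (r : 'I_d) : {set 'I_d} :=
  [set t | cig_edge C r t].

Definition pcorr (C : 'I_N -> 'M[R]_d) (alpha : 'I_N -> R) (a b : 'I_d) : R :=
  (N%:R)^-1 * \sum_(n < N) alpha n * (prec C n a b / prec C n a a) ^+ 2.

Definition CV (C : 'I_N -> 'M[R]_d) (r : 'I_d) (T : {set 'I_d}) : R :=
  (N%:R)^-1 * \tr (cond_cov (stack_cov C)
                     [set i : 'I_d * 'I_N | i.1 == r]
                     [set i : 'I_d * 'I_N | i.1 \in T]).

Definition Ktilde (C : 'I_N -> 'M[R]_d) (r : 'I_d) : 'M[R]_N :=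
  diag_mx (\row_(n < N) prec C n r r).

End Defs.

(* Main.v *)
Require Import Defs.
From HB Require Import structures.
From mathcomp Require Import all_boot all_order all_algebra.
From mathcomp Require Import reals.
From mathcomp Require Import complex.
From mathcomp Require Import ring lra.
Import Order.TTheory GRing.Theory Num.Theory.
Set Implicit Arguments. Unset Strict Implicit. Unset Printing Implicit Defensive.
Local Open Scope ring_scope.

Lemma conjC_realc (R : realType) (x : R) : Num.conj (x%:C)%C = (x%:C)%C.
Proof. by apply: conj_Creal; apply/complex_realP; exists x. Qed.

Lemma psd_lemma (R : realType) n (C : 'M[R]_n) (a : R) : C^T = C ->
  (forall lam, eigenvalue C lam -> a <= lam) ->
  forall x : 'rV_n, a * (x *m x^T) 0 0 <= (x *m C *m x^T) 0 0.
Proof.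
move=> hsym heig x.
pose Cc := map_mx (real_complex R) C.
have Hh : Cc \is hermsymmx.
  apply/is_hermitianmxP; rewrite expr0 scale1r; apply/matrixP => i j.
  by rewrite !mxE conjC_realc -{1}hsym mxE.
have /orthomx_spectralP HA := hermitian_normalmx Hh.
set P := spectralmx Cc in HA; set D := spectral_diag Cc in HA.
have Pu : P \is unitarymx by apply: spectral_unitarymx.
have Punit : P \in unitmx by apply: spectral_unit.
have Dreal : D \is a mxOver Num.real by apply: hermitian_spectral_diag_real.
have HD : forall i, a%:C%C <= D 0 i.
  move=> i.
  have Dr : D 0 i \is Num.real by move/mxOverP: Dreal => /(_ 0 i).
  have [k Hk] := complex_realP _ Dr.
  rewrite Hk lecR; apply: heig.
  rewrite eigenvalue_root_char -(fmorph_root (real_complex R)) map_char_poly.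
  suff H : eigenvalue Cc (D 0 i) by move: H; rewrite eigenvalue_root_char Hk.
  apply/eigenvalueP; exists (row i P).
    rewrite HA -row_mul !mulmxA mulmxV // mul1mx.
    by apply/rowP => j; rewrite mul_diag_mx !mxE.
  apply/negP => /eqP H0.
  move: Punit; rewrite -row_free_unit => /row_free_inj Hi.
  have := Hi 1%N (delta_mx 0 i) 0; rewrite mul0mx -rowE H0 => /(_ erefl) /matrixP /(_ 0 i).
  by rewrite !mxE !eqxx /= => /eqP; rewrite oner_eq0.
pose xc := map_mx (real_complex R) x.
have Ext : xc^T = map_mx Num.conj (xc^T).
  by apply/matrixP => i j; rewrite !mxE conjC_realc.
have E1 : real_complex R ((x *m C *m x^T) 0 0) = (xc *m Cc *m xc^T) 0 0.
  rewrite /xc /Cc map_trmx -map_mxM -map_mxM [RHS]mxE; reflexivity.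
have E2 : real_complex R ((x *m x^T) 0 0) = (xc *m xc^T) 0 0.
  rewrite /xc map_trmx -map_mxM [RHS]mxE; reflexivity.
rewrite -lecR rmorphM /= E1 E2 Ext.
have HPi := invmx_unitary Pu.
pose z := xc *m (map_mx Num.conj (P^T)).
have Ez : (map_mx Num.conj (z^T)) = P *m (map_mx Num.conj (xc^T)).
  by rewrite /z trmx_mul map_mxM; congr (_ *m _); apply/matrixP => i j; rewrite !mxE; exact: conjCK.
have -> : xc *m Cc *m (map_mx Num.conj (xc^T)) = z *m diag_mx D *m (map_mx Num.conj (z^T)).
  by rewrite Ez /z -HPi HA !mulmxA.
have -> : xc *m (map_mx Num.conj (xc^T)) = z *m (map_mx Num.conj (z^T)).
  by rewrite Ez /z -HPi -(mulmxA xc) (mulmxA _ P) mulVmx // mul1mx.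
rewrite !mxE mulr_sumr; apply: ler_sum => j _.
rewrite mul_mx_diag !mxE.
have key : forall w : R[i], a%:C%C * (w * Num.conj w) <= w * D 0 j * Num.conj w.
  move=> w; rewrite mulrAC [X in _ <= X]mulrC.
  by apply: ler_wpM2r; [exact: mul_conjC_ge0 | exact: HD].
exact: key.
Qed.

Definition qf (R : realType) (I : finType) (S : I -> I -> R) (y : I -> R) : R :=
  \sum_i y i * \sum_j S i j * y j.

Lemma sumr_delta (R : realType) (I : finType) (a : I) (F : I -> R) :
  \sum_i (i == a)%:R * F i = F a.
Proof.
rewrite (bigD1 a) //= eqxx mul1r big1 ?addr0 // => i /negbTE ->; by rewrite mul0r.
Qed.

Lemma sumr_delta' (R : realType) (I : finType) (a : I) (F : I -> R) :
  \sum_i F i * (i == a)%:R = F a.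
Proof. by rewrite -(sumr_delta a); apply: eq_bigr => i _; rewrite mulrC. Qed.

Lemma sum_swap_delta (R : realType) (I J : finType) (G : I -> R) (e : J -> I) (w : J -> R) :
  \sum_i G i * \sum_j (i == e j)%:R * w j = \sum_j G (e j) * w j.
Proof.
under eq_bigr do rewrite mulr_sumr.
rewrite exchange_big /=; apply: eq_bigr => j _.
under eq_bigr do rewrite mulrA.
by rewrite -mulr_suml sumr_delta'.
Qed.

Lemma qf_add (R : realType) (I : finType) (S : I -> I -> R) y z :
  (forall i j, S i j = S j i) ->
  qf S (fun i => y i + z i) = qf S y + qf S z + 2 * \sum_i z i * \sum_j S i j * y j.
Proof.
move=> Ssym.
have E : \sum_i y i * \sum_j S i j * z j = \sum_i z i * \sum_j S i j * y j.
  under eq_bigr do rewrite mulr_sumr.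
  rewrite exchange_big /=; apply: eq_bigr => j _; rewrite mulr_sumr.
  by apply: eq_bigr => i _; rewrite Ssym; ring.
have P : forall i, (y i + z i) * \sum_j S i j * (y j + z j) =
   y i * (\sum_j S i j * y j) + z i * (\sum_j S i j * z j) +
   (y i * (\sum_j S i j * z j) + z i * \sum_j S i j * y j).
  move=> i; rewrite (eq_bigr (fun j => S i j * y j + S i j * z j)).
    by rewrite big_split /=; ring.
  by move=> j _; rewrite mulrDr.
by rewrite /qf (eq_bigr _ (fun i _ => P i)) !big_split /= E; ring.
Qed.

Lemma schur_vec (R : realType) (I : finType) (S : I -> I -> R) (B : {set I}) (a : I) :
  a \notin B -> subcov S B B \in unitmx ->
  exists y : I -> R, [/\ y a = 1,
     (forall i, i != a -> i \notin B -> y i = 0),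
     (forall i, i \in B -> \sum_j S i j * y j = 0) &
     qf S y = S a a - \sum_j S a (enum_val j) *
                 \sum_l invmx (subcov S B B) j l * S (enum_val l) a].
Proof.
move=> aB Pu.
set P := subcov S B B; set Pi := invmx P.
pose w : 'I_#|B| -> R := fun j => \sum_l Pi j l * S (enum_val l) a.
pose y := fun i => (i == a)%:R - \sum_j (i == enum_val j)%:R * w j.
have out0 : forall i, i \notin B -> \sum_j (i == enum_val j)%:R * w j = 0.
  move=> i iB; apply: big1 => j _.
  case: eqP => [Ei|_]; last by rewrite mul0r.
  by move: iB; rewrite Ei enum_valP.
have Sy : forall i, \sum_j S i j * y j = S i a - \sum_m S i (enum_val m) * w m.
  move=> i; rewrite /y.
  under eq_bigr do rewrite mulrBr.
  by rewrite big_split /= sumrN sumr_delta' sum_swap_delta.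
have orth : forall i, i \in B -> \sum_j S i j * y j = 0.
  move=> i iB; rewrite Sy -(enum_rankK_in iB iB); set l := enum_rank_in iB i.
  apply/eqP; rewrite subr_eq0; apply/eqP.
  rewrite /w; under eq_bigr do rewrite mulr_sumr.
  rewrite exchange_big /=.
  have -> : S (enum_val l) a = \sum_q (1%:M : 'M[R]_#|B|) l q * S (enum_val q) a.
    by under eq_bigr do rewrite mxE eq_sym; rewrite sumr_delta.
  rewrite -(mulmxV Pu); apply: eq_bigr => q _.
  rewrite mxE mulr_suml; apply: eq_bigr => m _.
  by rewrite /P mxE mulrA.
exists y; split => //.
- by rewrite /y eqxx out0 // subr0.
- by move=> i ia iB; rewrite /y (negbTE ia) out0 // subr0.
have -> : qf S y = \sum_i ((i == a)%:R - \sum_j (i == enum_val j)%:R * w j) * \sum_j S i j * y j by [].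
under eq_bigr do rewrite mulrBl.
rewrite big_split /= sumrN sumr_delta.
under [X in _ - X]eq_bigr do rewrite mulrC.
rewrite sum_swap_delta [X in _ - X]big1 ?subr0.
  by rewrite Sy.
by move=> j _; rewrite orth ?enum_valP // mul0r.
Qed.

Lemma sum_pair (R : realType) (I J : finType) (F : I * J -> R) :
  \sum_p F p = \sum_a \sum_n F (a, n).
Proof. by rewrite pair_bigA; apply: eq_bigr => [[a n]] _. Qed.

Lemma qf_stack (R : realType) d N (C : 'I_N -> 'M[R]_d) (y : 'I_d * 'I_N -> R) :
  qf (stack_cov C) y = \sum_n qf (fun a b => C n a b) (fun a => y (a, n)).
Proof.
rewrite /qf sum_pair exchange_big /=; apply: eq_bigr => n _.
apply: eq_bigr => a _; congr (_ * _).
rewrite sum_pair; apply: eq_bigr => b _.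
rewrite (bigD1 n) //= big1 ?addr0 /stack_cov /= ?eqxx // => m /negbTE.
by rewrite eq_sym => ->; rewrite mul0r.
Qed.

Lemma qf_mx (R : realType) d (C : 'M[R]_d) (y : 'I_d -> R) :
  let x := \row_a y a in
  qf (fun a b => C a b) y = (x *m C *m x^T) 0 0 /\ \sum_a y a ^+ 2 = (x *m x^T) 0 0.
Proof.
move=> x; split.
  rewrite /qf mxE; under [RHS]eq_bigr do rewrite mxE mulr_suml.
  rewrite exchange_big /=; apply: eq_bigr => i _; rewrite mulr_sumr.
  by apply: eq_bigr => j _; rewrite !mxE mulrA.
by rewrite mxE; apply: eq_bigr => i _; rewrite !mxE expr2.
Qed.

Lemma qf_ext (R : realType) (I : finType) (S : I -> I -> R) y y' :
  (forall i, y i = y' i) -> qf S y = qf S y'.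
Proof.
move=> H; rewrite /qf; apply: eq_bigr => i _; rewrite H; congr (_ * _).
by apply: eq_bigr => j _; rewrite H.
Qed.

Lemma qf0 (R : realType) (I : finType) (S : I -> I -> R) y :
  (forall i, y i = 0) -> qf S y = 0.
Proof. by move=> H; rewrite /qf big1 // => i _; rewrite H mul0r. Qed.

Lemma sq_zero (R : realType) (I : finType) (al : R) (y : I -> R) :
  0 < al -> al * \sum_i y i ^+ 2 <= 0 -> forall i, y i = 0.
Proof.
move=> hal; rewrite pmulr_rle0 // => h i.
have h0 : forall i, true -> 0 <= y i ^+ 2 by move=> *; exact: sqr_ge0.
have hs : \sum_i y i ^+ 2 = 0 by apply/le_anti; rewrite h sumr_ge0.
by have /eqP := psumr_eq0P h0 hs (i:=i) erefl; rewrite sqrf_eq0 => /eqP.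
Qed.

Lemma tr_inv_diag (R : realType) N (D : 'rV[R]_N) :
  (forall n, D 0 n != 0) -> \tr (invmx (diag_mx D)) = \sum_n (D 0 n)^-1.
Proof.
move=> hD; pose D' := \row_n (D 0 n)^-1.
have H : diag_mx D *m diag_mx D' = 1%:M.
  apply/matrixP => i j; rewrite mul_diag_mx !mxE.
  by case: eqP => [->|]; rewrite ?mulr1n ?mulr0n ?mulr0 // mulfV.
have [Hu _] := mulmx1_unit H.
have -> : invmx (diag_mx D) = diag_mx D'.
  by rewrite -[LHS]mulmx1 -H mulmxA mulVmx // mul1mx.
by rewrite mxtrace_diag; apply: eq_bigr => n _; rewrite mxE.
Qed.

Theorem theorem1 (R : realType) (d N s : nat) (hd : (0 < d)%N) (hN : (0 < N)%N)
    (hs : (0 < s)%N)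
    (C : 'I_N -> 'M[R]_d) (alpha beta : 'I_N -> R) (rho_min : R)
    (hsym : forall n, (C n)^T = C n)
    (halpha : forall n, 0 < alpha n)
    (halphabeta : forall n, alpha n <= beta n)
    (heig : forall n (lam : R), eigenvalue (C n) lam -> alpha n <= lam <= beta n)
    (hdeg : forall r, (#|nbhd C r| <= s)%N)
    (hrho : 0 < rho_min)
    (hrhoE : forall a b, cig_edge C a b -> rho_min <= pcorr C alpha a b) :
  forall (r : 'I_d) (T : {set 'I_d}), r \notin T -> (#|T| <= s)%N ->
    (nbhd C r :\: T != set0 ->
       rho_min + (N%:R)^-1 * \tr (invmx (Ktilde C r)) <= CV C r T) /\
    (nbhd C r \subset T ->
       CV C r T = (N%:R)^-1 * \tr (invmx (Ktilde C r))).
Proof.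
move=> r T rT Tcard.
have Csym : forall n a b, C n a b = C n b a.
  by move=> n a b; rewrite -{1}(hsym n) mxE.
set S := stack_cov C.
have Ssym : forall i j, S i j = S j i.
  move=> [a n] [b m]; rewrite /S /stack_cov /= eq_sym.
  by case: eqP => [->|//]; rewrite Csym.
have psd : forall n (y : 'I_d -> R),
    alpha n * \sum_a y a ^+ 2 <= qf (fun a b => C n a b) y.
  move=> n y; have [-> ->] := qf_mx (C n) y.
  by apply: psd_lemma => // lam /heig /andP[].
have qn0 : forall n y, 0 <= qf (fun a b => C n a b) y.
  move=> n y; apply: le_trans (psd n y); apply: mulr_ge0; first exact: ltW.
  by apply: sumr_ge0 => *; exact: sqr_ge0.
have qS_ge : forall y n, qf (fun a b => C n a b) (fun a => y (a, n)) <= qf S y.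
  move=> y n; rewrite /S qf_stack (bigD1 n) //= lerDl.
  by apply: sumr_ge0 => m _; exact: qn0.
have qS_nn : forall y, 0 <= qf S y.
  move=> y; rewrite /S qf_stack; apply: sumr_ge0 => m _; exact: qn0.
have qS0 : forall y, qf S y = 0 -> forall i, y i = 0.
  move=> y H [a n].
  have h := le_trans (psd n (fun a => y (a, n))) (qS_ge y n).
  rewrite H in h.
  exact: (sq_zero (halpha n) h).
have Punit : forall B : {set 'I_d * 'I_N}, subcov S B B \in unitmx.
  move=> B; rewrite -row_free_unit; apply: inj_row_free => v Hv.
  pose z := fun i => \sum_j (i == enum_val j)%:R * v 0 j.
  have Hq : qf S z = 0.
    rewrite /qf.
    under eq_bigr do rewrite sum_swap_delta mulrC.
    rewrite sum_swap_delta.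
    under eq_bigr do rewrite mulr_suml.
    rewrite exchange_big /= big1 // => l _.
    have /rowP/(_ l) := Hv; rewrite !mxE => H0.
    transitivity (v 0 l * \sum_j v 0 j * subcov S B B j l); last by rewrite H0 mulr0.
    rewrite mulr_sumr; apply: eq_bigr => j _.
    by rewrite /subcov mxE; ring.
  move/qS0: Hq => Hz; apply/rowP => j; rewrite mxE.
  have := Hz (enum_val j); rewrite /z (bigD1 j) //= eqxx mul1r big1 ?addr0 //.
  by move=> l /negbTE ne; rewrite (inj_eq enum_val_inj) eq_sym ne mul0r.
have Cu : forall n, C n \in unitmx.
  move=> n; rewrite -row_free_unit; apply: inj_row_free => v Hv.
  have [//|vn0] := eqVneq v 0.
  have Hev : eigenvalue (C n) 0.
    by apply/eigenvalueP; exists v; [rewrite Hv scale0r | exact: vn0].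
  have /andP[h _] := heig n 0 Hev.
  by have := halpha n; rewrite ltNge h.
set K := fun n => prec C n.
have KC : forall n, K n *m C n = 1%:M by move=> n; rewrite /K /prec mulVmx.
have Cu_formula : forall n t, \sum_s C n t s * K n r s = (t == r)%:R.
  move=> n t; have /matrixP/(_ r t) := KC n; rewrite !mxE eq_sym => <-.
  by apply: eq_bigr => s0 _; rewrite Csym mulrC.
have Krr_pos : forall n, 0 < K n r r.
  move=> n.
  have E : qf (fun a b => C n a b) (fun t => K n r t) = K n r r.
    rewrite /qf; under eq_bigr do rewrite Cu_formula.
    exact: sumr_delta'.
  have h := psd n (fun t => K n r t); rewrite E in h.
  rewrite lt_def (le_trans _ h) ?andbT; last first.
    by apply: mulr_ge0; [exact: ltW | apply: sumr_ge0 => *; exact: sqr_ge0].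
  apply/eqP => K0; rewrite K0 in h.
  have Z := sq_zero (halpha n) h.
  have := Cu_formula n r; rewrite eqxx big1 => [/eqP|s0 _]; last by rewrite Z mulr0.
  by rewrite eq_sym oner_eq0.
have Kn0 : forall n, K n r r != 0 by move=> n; exact: lt0r_neq0 (Krr_pos n).
pose u := fun n (t : 'I_d) => K n r t / K n r r.
have Cu_u : forall n i, \sum_j C n i j * u n j = (i == r)%:R / K n r r.
  by move=> n i; rewrite -(Cu_formula n i) mulr_suml; apply: eq_bigr => j _; rewrite /u mulrA.
have qu : forall n, qf (fun a b => C n a b) (fun i => u n i) = (K n r r)^-1.
  move=> n; rewrite /qf; under eq_bigr do rewrite Cu_u mulrA.
  by rewrite -mulr_suml sumr_delta' /u mulfV ?mul1r.
have key : forall n (yn : 'I_d -> R), yn r = 1 ->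
   qf (fun a b => C n a b) yn = (K n r r)^-1 + qf (fun a b => C n a b) (fun t => yn t - u n t).
  move=> n yn y1.
  have -> : qf (fun a b => C n a b) yn =
      qf (fun a b => C n a b) (fun i => u n i + (yn i - u n i)).
    by apply: qf_ext => i; rewrite addrC subrK.
  rewrite [LHS]qf_add; last by move=> i j; exact: Csym.
  rewrite qu.
  under [X in 2 * X]eq_bigr do rewrite Cu_u mulrA.
  by rewrite -mulr_suml sumr_delta' y1 /u mulfV ?subrr ?mul0r ?mulr0 ?addr0.
set B := [set i : 'I_d * 'I_N | i.1 \in T].
pose val := fun p => S p p - \sum_j S p (enum_val j) *
    \sum_l invmx (subcov S B B) j l * S (enum_val l) p.
have aB : forall n, (r, n) \notin B by move=> n; rewrite inE.
have lower : forall n, exists yn : 'I_d -> R, [/\ yn r = 1,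
    (forall t, t \notin T -> t != r -> yn t = 0) &
    qf (fun a b => C n a b) yn <= val (r, n)].
  move=> n; have [y [y1 y0 yorth yq]] := schur_vec (aB n) (Punit B).
  exists (fun t => y (t, n)); split => //.
    move=> t tT tr; apply: y0; last by rewrite inE.
    by apply: contra tr => /eqP [->].
  by rewrite /val -yq; exact: qS_ge.
have upper : nbhd C r \subset T -> forall n, val (r, n) <= (K n r r)^-1.
  move=> sub n; have [y [y1 y0 yorth yq]] := schur_vec (aB n) (Punit B).
  pose lu := fun p : 'I_d * 'I_N => (p.2 == n)%:R * u n p.1.
  pose z := fun p => lu p - y p.
  have E : qf S lu = qf S y + qf S z + 2 * \sum_i z i * \sum_j S i j * y j.
    rewrite -qf_add //; apply: qf_ext => i; by rewrite /z addrC subrK.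
  have cross : \sum_i z i * \sum_j S i j * y j = 0.
    apply: big1 => [[t m]] _.
    have [HB|HB] := boolP ((t, m) \in B); first by rewrite yorth // mulr0.
    have tT : t \notin T by move: HB; rewrite inE.
    suff -> : z (t, m) = 0 by rewrite mul0r.
    rewrite /z /lu /=.
    have [Etr|tr] := eqVneq t r.
      rewrite Etr; have [Emn|mn] := eqVneq m n.
        by rewrite Emn y1 /u mulfV // mul1r subrr.
      rewrite y0 //; last by apply: contra mn => /eqP [->].
      by rewrite mul0r subr0.
    rewrite y0 //; last by apply: contra tr => /eqP [->].
    rewrite /u; have -> : K n r t = 0.
      apply/eqP; apply: contraR tT => Hk.
      apply: (subsetP sub); rewrite inE /cig_edge eq_sym tr /=.
      by apply/existsP; exists n.
    by rewrite mul0r mulr0 subr0.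
  have Hlu : qf S lu = (K n r r)^-1.
    rewrite /S qf_stack (bigD1 n) //= big1 ?addr0.
      rewrite -(qu n); apply: qf_ext => i; by rewrite /lu /= eqxx mul1r.
    move=> m /negbTE mn; apply: qf0 => i; by rewrite /lu /= mn mul0r.
  rewrite /val -yq -Hlu E cross mulr0 addr0 lerDl; exact: qS_nn.
have HCV : CV C r T = N%:R^-1 * \sum_n val (r, n).
  rewrite /CV; congr (_ * _).
  rewrite /mxtrace.
  change (\sum_i cond_cov S [set i0 : 'I_d * 'I_N | i0.1 == r] B i i = \sum_n val (r, n)).
  transitivity (\sum_(i < #|[set i0 : 'I_d * 'I_N | i0.1 == r]|) val (enum_val i)).
    apply: eq_bigr => i _; rewrite /cond_cov /val !mxE; congr (_ - _).
    under eq_bigr do rewrite !mxE mulr_suml.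
    rewrite exchange_big /=; apply: eq_bigr => j _; rewrite mxE mulr_sumr.
    by apply: eq_bigr => l _; rewrite ?mxE mulrA.
  rewrite -big_enum_val /= big_mkcond sum_pair (bigD1 r) //= [X in _ + X]big1 ?addr0.
    by apply: eq_bigr => n _; rewrite inE eqxx.
  by move=> a /negbTE ar; apply: big1 => n _; rewrite inE /= ar.
have HK : \tr (invmx (Ktilde C r)) = \sum_n (K n r r)^-1.
  rewrite /Ktilde tr_inv_diag => [|n]; last by rewrite mxE; exact: Kn0.
  by apply: eq_bigr => n _; rewrite mxE.
have lowK : forall n (yn : 'I_d -> R), yn r = 1 ->
    (K n r r)^-1 + alpha n * \sum_t (yn t - u n t) ^+ 2 <= qf (fun a b => C n a b) yn.
  by move=> n yn y1; rewrite (key n yn y1) lerD2l; exact: psd.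
have HNpos : 0 < (N%:R : R)^-1 by rewrite invr_gt0 ltr0n.
rewrite HCV HK; split.
  move=> /set0Pn [b0]; rewrite inE => /andP [b0T b0nb].
  have edge : cig_edge C r b0 by move: b0nb; rewrite inE.
  have rb0 : b0 != r by move: edge => /andP [+ _]; rewrite eq_sym.
  have hpc : rho_min <= N%:R^-1 * \sum_n alpha n * (K n r b0 / K n r r) ^+ 2.
    exact: hrhoE edge.
  have Hn : forall n, (K n r r)^-1 + alpha n * (K n r b0 / K n r r) ^+ 2 <= val (r, n).
    move=> n; have [yn [y1 y0 hq]] := lower n.
    apply: le_trans (le_trans (lowK n yn y1) hq); rewrite lerD2l.
    apply: ler_wpM2l; first exact: ltW.
    rewrite (bigD1 b0) //= y0 // sub0r sqrrN lerDl.
    by apply: sumr_ge0 => *; exact: sqr_ge0.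
  have Hs : \sum_n ((K n r r)^-1 + alpha n * (K n r b0 / K n r r) ^+ 2) <= \sum_n val (r, n).
    by apply: ler_sum => n _; exact: Hn.
  rewrite big_split /= in Hs.
  apply: le_trans (_ : _ <= N%:R^-1 * (\sum_n (K n r r)^-1 +
      \sum_n alpha n * (K n r b0 / K n r r) ^+ 2)) _.
    by rewrite mulrDr addrC lerD2l.
  by apply: ler_wpM2l; [exact: ltW | exact: Hs].
move=> sub; congr (_ * _); apply: eq_bigr => n _.
apply/le_anti; rewrite upper //=.
have [yn [y1 _ hq]] := lower n.
apply: le_trans (le_trans (lowK n yn y1) hq); rewrite lerDl.
apply: mulr_ge0; first exact: ltW.
by apply: sumr_ge0 => *; exact: sqr_ge0.
Qed.
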